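(* Let $n\ge3$ be odd, $R\in\mathbb{Q}$ not a square, $\zeta$ a primitive $n$th root of unity in $\mathbb{C}$, and $K=\mathbb{Q}(\sqrt R(\zeta-\zeta^{-1}))$. Then $\mathrm{Gal}(K/\mathbb{Q})\cong(\mathbb{Z}/n\mathbb{Z})^\times$, except in the case $R<0$ and $\sqrt R\in\mathbb{Q}(\zeta)$, where $\mathrm{Gal}(K/\mathbb{Q})\cong(\mathbb{Z}/n\mathbb{Z})^\times/\{\pm1\}$. *)

(* Defs.v *)
From HB Require Import structures.
From mathcomp Require Import all_boot all_order all_algebra all_fingroup all_solvable all_field.
Set Implicit Arguments. Unset Strict Implicit. Unset Printing Implicit Defensive.
Import GRing.Theory Num.Theory.
Local Open Scope ring_scope.

Definition Zp_pm1 (n : nat) : {set {unit 'Z_n}} :=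
  [set u : {unit 'Z_n} | (val u == 1) || (val u == -1)].

(* y belongs to the subfield Q(z) of algC: y is a rational polynomial in z. *)
Definition in_Qgen (z y : algC) : Prop :=
  exists p : {poly rat}, (map_poly ratr p).[z] = y.

(* Main.v *)
Require Import Defs.
From HB Require Import structures.
From mathcomp Require Import all_boot all_order all_algebra all_fingroup all_solvable all_field.
From mathcomp Require Import ring lra.
Import GRing.Theory Num.Theory.
Local Open Scope ring_scope.

Fixpoint QQ (R : rat) (j : nat) : {poly rat} * {poly rat} :=
  if j is j'.+1 then let pq := QQ R j' in
    (pq.2, (R^-1 *: 'X^2 + 2%:P) * pq.2 - pq.1)
  else (- 'X, 'X).

Lemma QQ_eval (R : rat) (s t : algC) j : s ^+ 2 = ratr R -> s != 0 -> t != 0 ->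
 (map_poly ratr (QQ R j).1).[s * (t - t^-1)] = s * (t ^+ (2*j) / t - t / t ^+ (2*j)) /\
 (map_poly ratr (QQ R j).2).[s * (t - t^-1)] = s * (t ^+ (2*j).+1 - (t ^+ (2*j).+1)^-1).
Proof.
move=> Hs s0 t0; elim: j => [|j [IH1 IH2]] /=.
  rewrite rmorphN /= map_polyX hornerN hornerX muln0 expr0 expr1.
  by split; field.
have u0 : t ^+ (2 * j) != 0 by rewrite expf_neq0.
split.
  rewrite IH2 mulnS exprD !exprS; move: u0; set u := t ^+ (2*j) => u0.
  field; rewrite ?u0 ?t0 //.
rewrite rmorphB /= hornerD hornerN rmorphM /= hornerM IH1 IH2 /=.
rewrite rmorphD /= map_polyZ map_polyXn map_polyC /= hornerD hornerZ hornerXn hornerC.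
rewrite fmorphV /= -Hs mulnS !exprSr exprD rmorph_nat.
move: u0; set u := t ^+ (2*j) => u0.
field; by rewrite ?u0 ?t0 ?s0 ?expf_neq0.
Qed.

Section Main.
Variables (n : nat) (R : rat) (z : algC) (L : splittingFieldType rat)
  (iota : {rmorphism L -> algC}) (x : L).
Hypotheses (n3 : (3 <= n)%N) (nodd : odd n) (Rns : ~ exists q : rat, q ^+ 2 = R)
  (zprim : n.-primitive_root z) (Hx : iota x = sqrtC (ratr R) * (z - z^-1)).

Local Notation s := (sqrtC (ratr R : algC)).
Definition w (k : nat) := s * (z ^+ k - (z ^+ k)^-1).

Lemma n1 : (1 < n)%N. Proof. by apply: leq_trans n3. Qed.
Lemma n0 : (0 < n)%N. Proof. by apply: leq_trans n3. Qed.
Lemma s2 : s ^+ 2 = ratr R. Proof. exact: sqrtCK. Qed.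
Lemma R0 : R != 0. Proof. by apply/eqP => R0; apply: Rns; exists 0; rewrite R0 expr0n. Qed.
Lemma s0 : s != 0.
Proof. by apply/eqP => h; move: s2; rewrite h expr0n /= => /eqP; rewrite eq_sym fmorph_eq0 (negPf R0). Qed.
Lemma z0 : z != 0. Proof. by rewrite (prim_root_eq0 zprim) -lt0n n0. Qed.
Lemma zn : z ^+ n = 1. Proof. exact: prim_expr_order zprim. Qed.
Lemma w_mod k : w (k %% n) = w k. Proof. by rewrite /w (prim_expr_mod zprim). Qed.
Lemma w1 : w 1 = iota x. Proof. by rewrite Hx /w expr1. Qed.

Lemma zinv k : z ^+ (k * n.-1)%N = (z ^+ k)^-1.
Proof.
apply: (mulIf (expf_neq0 k z0)); rewrite mulVf ?expf_neq0 ?z0 // -exprD.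
by rewrite -{2}(muln1 k) -mulnDr addn1 prednK ?n0 // mulnC exprM zn expr1n.
Qed.

Lemma w_eq k l : w k = w l -> k = l %[mod n].
Proof.
rewrite /w => /(mulfI s0) h; apply/eqP; rewrite -(eq_prim_root_expr zprim).
have a0 := expf_neq0 k z0; have b0 := expf_neq0 l z0.
move: h a0 b0; set a := z ^+ k; set b := z ^+ l => h a0 b0.
have : (a - b) * (a * b + 1) = 0.
  have e : (a - b) * (a * b + 1) = (a * b) * ((a - a^-1) - (b - b^-1)).
    by field; rewrite a0 b0.
  by rewrite e h subrr mulr0.
move/eqP; rewrite mulf_eq0 subr_eq0 => /orP[// | ].
rewrite addr_eq0 /a /b -exprD => /eqP e.
have : z ^+ (2 * (k + l)) = 1 by rewrite mulnC exprM e sqrrN expr1n.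
move/eqP; rewrite -(prim_order_dvd zprim) Gauss_dvdr; last by rewrite coprimen2.
rewrite (prim_order_dvd zprim) e => /eqP h2.
have : (2 : algC) == 0 by rewrite -[2]/(1 + 1) -{1}h2 addNr.
by rewrite pnatr_eq0.
Qed.

Definition Qa (k : nat) : {poly rat} := (QQ R (if odd k then k else k + n)./2).2.

Lemma Qa_w k l : (map_poly ratr (Qa k)).[w l] = w (k * l)%N.
Proof.
rewrite /Qa; set m := (if odd k then k else k + n).
have om : odd m by rewrite /m; case: ifP => // ok; rewrite oddD nodd addbT ok.
have [_ ->] := QQ_eval R s (z ^+ l) (m./2) s2 s0 (expf_neq0 l z0).
have -> : (2 * m./2).+1 = m by rewrite -{2}(odd_double_half m) om add1n mul2n.
have -> : (z ^+ l) ^+ m = z ^+ (k * l)%N.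
  rewrite -exprM /m; case: ifP => _; first by rewrite mulnC.
  by rewrite mulnDr exprD [(l * n)%N]mulnC [z ^+ (n * l)]exprM zn expr1n mulr1 mulnC.
by [].
Qed.

Local Notation E := (<<1; x>>%VS).
Definition pQL (p : {poly rat}) : {poly L} := map_poly (in_alg L) p.

Lemma iota_pQL p y : iota (pQL p).[y] = (map_poly ratr p).[iota y].
Proof.
rewrite -horner_map /pQL -map_poly_comp; congr (_.[_]); apply: eq_map_poly => r /=.
by rewrite alg_num_field fmorph_rat.
Qed.

Lemma gal_pQL (g : gal_of E) p y : g (pQL p).[y] = (pQL p).[g y].
Proof.
rewrite -horner_map /pQL -map_poly_comp; congr (_.[_]); apply: eq_map_poly => r /=.
by rewrite linearZ /= rmorph1.
Qed.

Definition wu (u : {unit 'Z_n}) := w (val u).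

Definition mkU k : {unit 'Z_n} := insubd (1%g : {unit 'Z_n}) (k%:R : 'Z_n).

Lemma mkU_val k : coprime k n -> (val (val (mkU k)) = k %% n)%N.
Proof.
move=> ck; rewrite /mkU insubdK; last by rewrite unitZpE ?n1 // coprime_sym.
exact: (val_Zp_nat n1).
Qed.

Lemma wu_mkU k : coprime k n -> wu (mkU k) = w k.
Proof. by move=> ck; rewrite /wu mkU_val // w_mod. Qed.

Lemma w_neg k : w (k * n.-1)%N = - w k.
Proof. by rewrite /w zinv invrK; ring. Qed.

Lemma nu_s (nu : {rmorphism algC -> algC}) : nu s = s \/ nu s = - s.
Proof.
have : (nu s)^+2 == s^+2 by rewrite -rmorphXn s2 fmorph_rat.
by rewrite eqf_sqr => /orP[/eqP ->|/eqP ->]; [left|right].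
Qed.

Lemma aut_w (nu : {rmorphism algC -> algC}) : exists u : {unit 'Z_n}, nu (iota x) = wu u.
Proof.
have [k ck Hk] := aut_prim_rootP nu zprim.
have e : nu (iota x) = nu s * (z ^+ k - (z ^+ k)^-1).
  by rewrite Hx rmorphM rmorphB fmorphV Hk.
case: (nu_s nu) => ns.
  by exists (mkU k); rewrite wu_mkU // e ns.
exists (mkU (k * n.-1)%N); first rewrite wu_mkU ?coprimeMl ?ck ?coprimePn ?n0 //.
by rewrite w_neg e ns /w mulNr.
Qed.

Definition idx (g : gal_of E) : {unit 'Z_n} :=
  odflt 1%g [pick u : {unit 'Z_n} | iota (g x) == wu u].

Lemma idx_spec (g : gal_of E) : iota (g x) = wu (idx g).
Proof.
have [nu Hnu] := extend_algC_subfield_aut iota (gal_repr g).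
have [u Hu] := aut_w nu.
rewrite /idx; case: pickP => [u' /eqP // | /(_ u)].
by rewrite Hnu Hu eqxx.
Qed.

Lemma ltnZ (u : 'Z_n) : (u < n)%N.
Proof. by rewrite -{2}(Zp_cast n1) ltn_ord. Qed.

Lemma w_unit_inj u v : wu u = wu v -> u = v.
Proof.
move/w_eq; rewrite !modn_small ?ltnZ // => h.
by apply: val_inj; apply: val_inj.
Qed.

Lemma wu_mul u v : wu (u * v)%g = w (val (val u) * val (val v))%N.
Proof.
rewrite /wu FinRing.val_unitM.
have -> : (val u * val v : 'Z_n) = ((val u : nat) * (val v : nat))%:R.
  by rewrite natrM !natr_Zp.
by rewrite val_Zp_nat ?n1 // w_mod.
Qed.

Lemma gx_Q (g : gal_of E) : g x = (pQL (Qa (val (idx g)))).[x].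
Proof. by apply: (fmorph_inj iota); rewrite iota_pQL -w1 Qa_w muln1 idx_spec. Qed.

Lemma idxM (g h : gal_of E) : idx (g * h)%g = (idx g * idx h)%g.
Proof.
apply: w_unit_inj; rewrite -idx_spec galM ?memv_adjoin //.
by rewrite gx_Q gal_pQL iota_pQL idx_spec Qa_w wu_mul mulnC.
Qed.

Lemma idx_inj : {in 'Gal(E / 1)%g &, injective idx}.
Proof.
move=> g h Hg Hh e; apply/eqP; rewrite gal_adjoin_eq //; apply/eqP.
by apply: (fmorph_inj iota); rewrite !idx_spec e.
Qed.


Lemma realize (nu : {rmorphism algC -> algC}) :
  exists2 g : gal_of E, g \in 'Gal(E / 1)%g & iota (g x) = nu (iota x).
Proof.
have [u Hu] := aut_w nu.
set y := (pQL (Qa (val (val u)))).[x].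
have Ey : y \in E.
  apply: mempx_Fadjoin; apply/polyOverP => i; rewrite coef_map /=.
  by rewrite rpredZ ?mem1v.
have iy : iota y = wu u by rewrite iota_pQL -w1 Qa_w muln1.
have ry : root (minPoly 1 x) y.
  apply/eqP/(fmorph_inj iota); rewrite rmorph0 -horner_map iy -Hu.
  rewrite -(map_Qnum_poly iota nu (minPolyOver 1 x)) map_poly_comp horner_map /=.
  by rewrite horner_map /= (eqP (root_minPoly 1 x)) !rmorph0.
have [g0 _ Hg0] := normalField_root_minPoly (sub1v _) (normalFieldf 1) (memvf x) ry.
have : kAut 1 E g0.
  rewrite kAut1E aimg_adjoin aimg1 Hg0; apply/FadjoinP; split => //; exact: sub1v.
case/kAut_to_gal => g Hg Hgg0.
by exists g => //; rewrite -Hgg0 ?memv_adjoin // Hg0 iy Hu.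
Qed.

Definition m1 := mkU n.-1.

Lemma m1_val : (val (val m1) = n.-1)%N.
Proof. by rewrite mkU_val ?coprimePn ?n0 // modn_small // prednK ?n0. Qed.

Lemma wu_m1 u : wu (u * m1)%g = - wu u.
Proof. by rewrite wu_mul m1_val w_neg. Qed.

Lemma realize_unit (u : {unit 'Z_n}) :
  exists2 g : gal_of E, g \in 'Gal(E / 1)%g & idx g = u \/ idx g = (u * m1)%g.
Proof.
set k := val (val u).
have ck : coprime k n.
  by rewrite coprime_sym -unitZpE ?n1 // /k natr_Zp; apply: (valP u).
have [nu Hnu] := Qn_aut_exists ck.
have [g Hg Hgx] := realize nu.
exists g => //.
have e : nu (iota x) = nu s * (z ^+ k - (z ^+ k)^-1).
  by rewrite Hx rmorphM rmorphB fmorphV (Hnu z zn).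
case: (nu_s nu) => ns; [left | right]; apply: w_unit_inj; rewrite -idx_spec Hgx e ns.
  by [].
by rewrite wu_m1 /wu /w -/k mulNr.
Qed.

Lemma m1_real (nu : {rmorphism algC -> algC}) : nu (iota x) = - iota x ->
  exists2 g : gal_of E, g \in 'Gal(E / 1)%g & idx g = m1.
Proof.
move=> h; have [g Hg Hgx] := realize nu.
exists g => //; apply: w_unit_inj; rewrite -idx_spec Hgx h -w1.
by rewrite -[m1]mul1g wu_m1 /wu FinRing.val_unit1 /= -(Zp_cast n1).
Qed.


Lemma conjz : z^* = z^-1.
Proof.
have nz : `|z| = 1.
  by apply/eqP; rewrite -(@pexpr_eq1 _ _ n) ?n0 // -normrX zn normr1.
have h : z * z^* = 1 by rewrite -normCK nz expr1n.
by rewrite -[z^*]mul1r -(mulVf z0) -mulrA h mulr1.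
Qed.

Lemma conj_s_pos : 0 < R -> s^* = s.
Proof. by move=> R0; rewrite conj_Creal // sqrtC_real // ler0q Order.POrderTheory.ltW. Qed.

Lemma conj_s_neg : R < 0 -> s^* = - s.
Proof.
move=> Rlt.
have : (s^*)^+2 == s^+2 by rewrite -rmorphXn s2 fmorph_rat.
rewrite eqf_sqr => /orP[/eqP h|/eqP //].
have : 0 <= s ^+ 2 by rewrite expr2 -{2}h -normCK exprn_ge0.

by rewrite s2 ler0q Order.TotalTheory.leNgt Rlt.
Qed.

Lemma R_pos_m1 : 0 < R -> exists2 g : gal_of E, g \in 'Gal(E / 1)%g & idx g = m1.
Proof.
move=> Rp; apply: (m1_real Num.Def.conjC).
rewrite Hx rmorphM rmorphB fmorphV /= conjz conj_s_pos // invrK; ring.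
Qed.

Lemma flip_s : ~ in_Qgen z s ->
  exists nu : {rmorphism algC -> algC}, nu z = z /\ nu s = - s.
Proof.
move=> nQ.
have [Qs [QsC [[|zq [|sq []]] // [Dz Ds]] genQs]] := num_field_exists [:: z; s].
pose F := <<1; zq>>%AS.
have sqF : sq \notin F.
  apply/negP => /Fadjoin_polyP [p Fp ep]; apply: nQ.
  have [q Dp] := polyOver1P Fp.
  exists q; rewrite -Ds ep Dp -Dz -horner_map -map_poly_comp; congr (_.[_]).
  by apply: eq_map_poly => r /=; rewrite alg_num_field fmorph_rat.
have sq2 : sq ^+ 2 = R%:A.
  by apply: (fmorph_inj QsC); rewrite rmorphXn Ds s2 alg_num_field fmorph_rat.
pose q2 : {poly Qs} := 'X^2 - (R%:A)%:P.
have q2m : q2 \is monic by rewrite monicXnsubC.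
have rq2 : root q2 sq by rewrite rootE !hornerE sq2 subrr.
have mp : minPoly F sq = q2.
  have dv : minPoly F sq %| q2.
    apply: minPoly_dvdp => //; rewrite rpredB ?rpredX ?polyOverX //.
    by rewrite polyOverC // rpredZ ?mem1v.
  have sz : size q2 = 3%N.
    by rewrite size_addl ?size_polyXn // size_opp size_polyC; case: eqP.
  apply/eqP; rewrite -eqp_monic ?monic_minPoly // -dvdp_size_eqp // sz size_minPoly.
  have d1 : adjoin_degree F sq != 1%N by rewrite adjoin_deg_eq1.
  have d0 : (1 < size (minPoly F sq))%N.
    by apply: (@root_size_gt1 _ sq); rewrite ?monic_neq0 ?monic_minPoly ?root_minPoly.
  have d3 : (size (minPoly F sq) <= 3)%N.
    by rewrite -sz dvdp_leq // monic_neq0.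
  move: d0 d3 d1; rewrite size_minPoly; case: (adjoin_degree F sq) => [|[|[|d]]] //.
have rt : root (map_poly \1%VF (minPoly F sq)) (- sq).
  by rewrite lfun1_poly mp rootE !hornerE sqrrN sq2 subrr.
have homF : kHom F F \1 by rewrite kHom1.
pose phi := kHomExtend F \1 sq (- sq).
have hphi : kHom F <<F; sq>> phi := kHomExtendP (subvv F) homF rt.
have full : <<F; sq>>%VS = fullv by rewrite -genQs adjoin_cons adjoin_seq1.
have phim : monoid_morphism phi.
  apply/kHom_monoid_morphism; rewrite -full; exact: kHomSl (sub1v F) hphi.
pose phimM := GRing.isMonoidMorphism.Build _ _ phi phim.
pose phiRM : {rmorphism _ -> _} := HB.pack (fun_of_lfun phi) phimM.
have [nu Dnu] := extend_algC_subfield_aut QsC phiRM.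
exists nu; split.
  by rewrite -Dz -Dnu /= kHomExtend_id ?memv_adjoin // id_lfunE.
by rewrite -Ds -Dnu /= (kHomExtend_val homF rt) rmorphN.
Qed.

Lemma R_neg_m1 : ~ in_Qgen z s -> exists2 g : gal_of E, g \in 'Gal(E / 1)%g & idx g = m1.
Proof.
move=> nQ; have [nu [nz ns]] := flip_s nQ; apply: (m1_real nu).
by rewrite Hx rmorphM rmorphB fmorphV nz ns mulNr.
Qed.

Lemma excl : R < 0 -> in_Qgen z s -> forall g : gal_of E, idx g != m1.
Proof.
move=> Rlt [p Dp] g; apply/eqP => hg.
have [nu Hnu] := extend_algC_subfield_aut iota (gal_repr g).
have hx : nu (iota x) = - iota x.
  by rewrite -Hnu idx_spec hg -[m1]mul1g wu_m1 /wu FinRing.val_unit1 /= -(Zp_cast n1) w1.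
have [k ck Hk] := aut_prim_rootP nu zprim.
have nuP (mu : {rmorphism algC -> algC}) t :
    mu ((map_poly ratr p).[t]) = (map_poly ratr p).[mu t].
  rewrite -horner_map -map_poly_comp; congr (_.[_]).
  by apply: eq_map_poly => r /=; rewrite fmorph_rat.
have e : nu (iota x) = nu s * (z ^+ k - (z ^+ k)^-1).
  by rewrite Hx rmorphM rmorphB fmorphV Hk.
have sn0 : s != - s.
  apply/eqP => h; have : s *+ 2 == 0 by rewrite mulr2n {2}h subrr.
  by rewrite mulrn_eq0 /= (negPf s0).
case: (nu_s nu) => ns.
- have : w k = w (1 * n.-1)%N by rewrite w_neg w1 -hx e ns.
  move/w_eq/eqP; rewrite -(eq_prim_root_expr zprim) zinv expr1 => /eqP zk.
  have cP : (map_poly ratr p).[z^*] = s^* by rewrite -Dp; exact: (esym (nuP Num.Def.conjC z)).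
  have : nu s = - s by rewrite -{1}Dp nuP Hk zk -conjz cP conj_s_neg.
  by rewrite ns; move/eqP; rewrite (negPf sn0).
- have : w k = w 1.
    by apply: oppr_inj; rewrite w1 -hx e ns /w mulNr.
  move/w_eq/eqP; rewrite -(eq_prim_root_expr zprim) expr1 => /eqP zk.
  have : nu s = s by rewrite -{1}Dp nuP Hk zk Dp.
  by rewrite ns => h; move: sn0; rewrite h eqxx.
Qed.


Local Open Scope group_scope.

Lemma idxM_in : {in 'Gal(E / 1)%g &, {morph idx : g h / (g * h)%g}}.
Proof. by move=> g h _ _; exact: idxM. Qed.

Definition idxm := Morphism idxM_in.

Lemma idxm_inj : ('injm idxm)%g.
Proof. by apply/injmP; exact: idx_inj. Qed.

Lemma H_cover u : u \in idxm @* 'Gal(E / 1)%g \/ (u * m1)%g \in idxm @* 'Gal(E / 1)%g.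
Proof.
have [g Hg [e|e]] := realize_unit u; [left|right]; rewrite -e; exact: mem_morphim.
Qed.

Lemma m1m1 : (m1 * m1 = 1)%g.
Proof.
apply: w_unit_inj; rewrite wu_m1 -{1}[m1]mul1g wu_m1 opprK //.
Qed.

Lemma G_iso_H : ('Gal(E / 1)%g \isog idxm @* 'Gal(E / 1)%g)%g.
Proof. by apply/isogP; exists idxm => //; exact: idxm_inj. Qed.

Lemma main_nonexc : m1 \in idxm @* 'Gal(E / 1)%g -> ('Gal(E / 1)%g \isog units_Zp n)%g.
Proof.
move=> Hm1.
have -> : units_Zp n = idxm @* 'Gal(E / 1)%g.
  apply/eqP; rewrite eqEsubset subsetT andbT; apply/subsetP => u _.
  case: (H_cover u) => // hu.
  by rewrite -[u]mulg1 -m1m1 mulgA groupM.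
exact: G_iso_H.
Qed.

Lemma m1_val2 : val m1 = (-1)%R.
Proof.
rewrite /m1 /mkU insubdK; last by rewrite unitZpE ?n1 // coprimenP ?n0.
apply/eqP; rewrite -addr_eq0 -GRing.mulrSr prednK ?n0 //; apply/eqP; exact: pchar_Zp n1.
Qed.

Lemma pm1 u : (u \in Zp_pm1 n) = (u == 1)%g || (u == m1).
Proof.
rewrite inE -m1_val2 -(FinRing.val_unit1 'Z_n).
by rewrite !(inj_eq val_inj).
Qed.

Lemma pm1_gs : group_set (Zp_pm1 n).
Proof.
apply/group_setP; split; first by rewrite pm1 eqxx.
move=> a b; rewrite !pm1 => /orP[]/eqP-> /orP[]/eqP->;
  by rewrite ?mul1g ?mulg1 ?m1m1 eqxx ?orbT.
Qed.

Lemma main_exc : m1 \notin idxm @* 'Gal(E / 1)%g ->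
  ('Gal(E / 1)%g \isog (units_Zp n / Zp_pm1 n))%g.
Proof.
move=> Hm1.
pose P := Group pm1_gs.
set H := (idxm @* 'Gal(E / 1)%g)%G.
have PH : (P :&: H = 1)%g.
  apply/eqP; rewrite eqEsubset sub1G andbT; apply/subsetP => u.
  rewrite inE pm1 => /andP[/orP[/eqP->|/eqP->] Hu]; first by rewrite inE.
  by rewrite Hu in Hm1.
have HP : (H * P)%g = units_Zp n.
  apply/eqP; rewrite eqEsubset subsetT /=; apply/subsetP => u _.
  case: (H_cover u) => hu.
    by rewrite -[u]mulg1 mem_mulg // pm1 eqxx.
  by rewrite -[u]mulg1 -m1m1 mulgA mem_mulg // pm1 eqxx orbT.
have nPH : H \subset 'N(P)%g.
  apply: subset_trans (sub_abelian_norm (units_Zp_abelian n) (subsetT P)).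
  exact: subsetT.
apply: isog_trans G_iso_H _.
apply: isog_trans (quotient1_isog H) _.
have := weak_second_isog nPH; rewrite PH HP; exact.
Qed.

End Main.


Theorem proposition4 (n : nat) (R : rat) (z : algC)
    (L : splittingFieldType rat) (iota : {rmorphism L -> algC}) (x : L) :
  (3 <= n)%N -> odd n ->
  ~ (exists q : rat, q ^+ 2 = R) ->
  n.-primitive_root z ->
  iota x = sqrtC (ratr R) * (z - z^-1) ->
  ((R < 0) /\ in_Qgen z (sqrtC (ratr R)) ->
     ('Gal(<<1; x>>%VS / 1%VS) \isog (units_Zp n / Zp_pm1 n))%g) /\
  (~ ((R < 0) /\ in_Qgen z (sqrtC (ratr R))) ->
     ('Gal(<<1; x>>%VS / 1%VS) \isog units_Zp n)%g).
Proof.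
move=> n3 nodd Rns zprim Hx; split.
  case=> Rlt Q; refine (@main_exc n R z L iota x n3 nodd Rns zprim Hx _).
  apply/negP => /morphimP[g _ Hg e].
  by move: (@excl n R z L iota x n3 nodd Rns zprim Hx Rlt Q g); rewrite e eqxx.
move=> nexc; refine (@main_nonexc n R z L iota x n3 nodd Rns zprim Hx _).
have [g Hg e] : exists2 g : gal_of <<1; x>>, g \in 'Gal(<<1; x>> / 1)%g & idx n R z L iota x g = m1 n.
  have := @R0 R Rns; rewrite Order.TotalTheory.neq_lt => /orP[Rlt|Rgt].
    apply: (@R_neg_m1 n R z L iota x n3 nodd Rns zprim Hx) => Q; exact: nexc.
  exact: (@R_pos_m1 n R z L iota x n3 nodd Rns zprim Hx).
by rewrite -e; apply: mem_morphim.
Qed.
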